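(* Let $n\ge3$ be an odd integer. For $1\le r\le n-1$ let $T^r_n=\{(k,a,b)\in(\mathbb{R}\setminus C_n)\times\mathbb{R}\times\mathbb{R}: k\neq0,\ \mathrm{rank}(B^{(k,a,b)}_n)\le r,\ 4a^3+27b^2=0\}\setminus\{(k,0,0):k\in\mathbb{R}\}$. Then (a) $T^{n-1}_n=\{(k,a^{(n)}_{k,3},b^{(n)}_{k,3}): k\in\mathbb{R}\setminus C_n\}$; (b) the matrix $B^{(k,a,b)}_n$ has rank exactly $n-1$ for all but finitely many triples $(k,a,b)\in T^{n-1}_n$; (c) for each $1\le r\le n-2$, the matrix $B^{(k,a,b)}_n$ has rank $r$ for only finitely many triples $(k,a,b)\in T^{n-1}_n$.
   Context: For real $k,a,b$, the generalized $k$-FL sequence is $S^{(a,b)}_{k,0}=2b$, $S^{(a,b)}_{k,1}=bk+a$, $S^{(a,b)}_{k,m}=kS^{(a,b)}_{k,m-1}+S^{(a,b)}_{k,m-2}$. $B^{(k,a,b)}_n$ is the $n\times n$ circulant matrix whose $(i,j)$ entry is $S^{(a,b)}_{k,j-i+1}$ if $j\ge i$ and $S^{(a,b)}_{k,n+j-i+1}$ if $j<i$. Define $f_m,g_m\in\mathbb{Z}[T]$ by $f_0=0,f_1=1,g_0=2,g_1=T$, $f_m=Tf_{m-1}+f_{m-2}$, $g_m=Tg_{m-1}+g_{m-2}$; $P_n=f_{n+1}+f_n$, $Q_n=g_{n+1}+g_n$; $C_n=\{k\in\mathbb{R}: P_n(k)-1=0\text{ or }Q_n(k)-k-2=0\}$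 (for odd $n$, $0\in C_n$). For $k\notin C_n$, the singular $k$-FL pair of level $n$ of Type 3 is $a^{(n)}_{k,3}=-\frac{27(P_n(k)-1)^2}{4(Q_n(k)-k-2)^2}$, $b^{(n)}_{k,3}=\frac{27(P_n(k)-1)^3}{4(Q_n(k)-k-2)^3}$. The condition $4a^3+27b^2=0$ means the curve $y^2=x^3+ax+b$ is singular. *)

(* Defs.v *)
From HB Require Import structures.
From mathcomp Require Import all_boot all_order all_algebra.
From mathcomp Require Import reals.
Set Implicit Arguments. Unset Strict Implicit. Unset Printing Implicit Defensive.
Import Order.TTheory GRing.Theory Num.Theory.
Local Open Scope ring_scope.

Section Defs.
Variable R : realType.

Fixpoint lrec (k x0 x1 : R) (m : nat) : R * R :=
  match m with
  | 0%N => (x0, x1)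
  | m'.+1 => let p := lrec k x0 x1 m' in (p.2, k * p.2 + p.1)
  end.

Definition S (k a b : R) (m : nat) : R := (lrec k (2 * b) (b * k + a) m).1.

(* circulant matrix B^{(k,a,b)}_n (0-based indices, same j-i offsets) *)
Definition Bmx (n : nat) (k a b : R) : 'M[R]_n :=
  \matrix_(i < n, j < n)
     if (i <= j)%N then S k a b (j - i + 1) else S k a b (n + j - i + 1).

(* f_m(k), g_m(k) : the polynomials f_m, g_m evaluated at T = k *)
Definition fpol (k : R) (m : nat) : R := (lrec k 0 1 m).1.
Definition gpol (k : R) (m : nat) : R := (lrec k 2 k m).1.

Definition Ppol (n : nat) (k : R) : R := fpol k n.+1 + fpol k n.
Definition Qpol (n : nat) (k : R) : R := gpol k n.+1 + gpol k n.

Definition inC (n : nat) (k : R) : Prop :=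
  Ppol n k - 1 = 0 \/ Qpol n k - k - 2 = 0.

Definition a3 (n : nat) (k : R) : R :=
  - (27 * (Ppol n k - 1) ^+ 2) / (4 * (Qpol n k - k - 2) ^+ 2).
Definition b3 (n : nat) (k : R) : R :=
  (27 * (Ppol n k - 1) ^+ 3) / (4 * (Qpol n k - k - 2) ^+ 3).

Definition inT (n r : nat) (k a b : R) : Prop :=
  ~ inC n k /\ k != 0 /\ (\rank (Bmx n k a b) <= r)%N /\
  4 * a ^+ 3 + 27 * b ^+ 2 = 0 /\ ~ (a = 0 /\ b = 0).

End Defs.

(* Main.v *)
Require Import Defs.
From HB Require Import structures.
From mathcomp Require Import all_boot all_order all_algebra.
From mathcomp Require Import reals.
From mathcomp Require Import ring lra zify.
Import Order.TTheory GRing.Theory Num.Theory.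
Set Implicit Arguments. Unset Strict Implicit. Unset Printing Implicit Defensive.
Local Open Scope ring_scope.

Lemma ind2 (P : nat -> Prop) : P 0%N -> P 1%N ->
  (forall m, P m -> P m.+1 -> P m.+2) -> forall m, P m.
Proof.
move=> H0 H1 HS m; suff: P m /\ P m.+1 by case.
elim: m => [|m [IH1 IH2]]; first by split.
by split => //; exact: HS.
Qed.

Lemma fpolS (R : realType) (k : R) m : fpol k m.+2 = k * fpol k m.+1 + fpol k m.
Proof. by []. Qed.
Lemma gpolS (R : realType) (k : R) m : gpol k m.+2 = k * gpol k m.+1 + gpol k m.
Proof. by []. Qed.
Lemma SS (R : realType) (k a b : R) m : S k a b m.+2 = k * S k a b m.+1 + S k a b m.
Proof. by []. Qed.

Lemma gpolE (R : realType) (k : R) m : gpol k m = 2 * fpol k m.+1 - k * fpol k m.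
Proof.
elim/ind2: m => [|| m IH1 IH2].
- rewrite /gpol /fpol /=; ring.
- rewrite /gpol /fpol /=; ring.
rewrite gpolS IH1 IH2 (fpolS k m.+1) (fpolS k m); ring.
Qed.

Lemma SE (R : realType) (k a b : R) m : S k a b m = b * gpol k m + a * fpol k m.
Proof.
elim/ind2: m => [|| m IH1 IH2].
- rewrite /S /gpol /fpol /=; ring.
- rewrite /S /gpol /fpol /=; ring.
rewrite SS IH1 IH2 gpolS fpolS; ring.
Qed.

Lemma cassini (R : realType) (k : R) m :
  fpol k m.+2 * fpol k m - fpol k m.+1 ^+ 2 = (-1) ^+ m.+1.
Proof.
elim: m => [|m IH]; first by rewrite /fpol /=; ring.
rewrite [(-1) ^+ m.+2]exprS -IH (fpolS k m.+1) (fpolS k m); ring.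
Qed.

Lemma gpol_pos (R : realType) (k : R) m : 0 < k -> 0 < gpol k m.
Proof.
move=> hk; elim/ind2: m => [|| m IH1 IH2]; rewrite ?gpolS.
- by rewrite /gpol /=.
- by rewrite /gpol /=.
by apply: addr_gt0 => //; apply: mulr_gt0.
Qed.

Lemma gpol_neg (R : realType) (k : R) m : k < 0 -> 0 < (-1) ^+ m * gpol k m.
Proof.
move=> hk; elim/ind2: m => [|| m IH1 IH2].
- by rewrite /gpol /= mul1r.
- rewrite /gpol /= expr1 mulN1r; lra.
have -> : (-1) ^+ m.+2 * gpol k m.+2 =
   (-k) * ((-1) ^+ m.+1 * gpol k m.+1) + (-1) ^+ m * gpol k m.
  by rewrite gpolS !exprS; ring.
apply: addr_gt0 => //; apply: mulr_gt0 => //; lra.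
Qed.

Lemma gpol_neq0 (R : realType) (k : R) n : odd n -> k != 0 -> gpol k n != 0.
Proof.
move=> hn hk; case: (ltrgtP k 0) => hk'.
- have := gpol_neg n hk'; rewrite -signr_odd hn expr1 mulN1r.
  by apply: contraTneq => ->; rewrite oppr0 ltxx.
- by have := gpol_pos n hk'; rewrite lt0r => /andP[].
- by move: hk; rewrite hk' eqxx.
Qed.

Lemma fpol0 (R : realType) m : fpol (0 : R) m = (odd m)%:R.
Proof.
elim/ind2: m => [|| m IH1 IH2]; first by [].
- by [].
by rewrite fpolS IH1 mul0r add0r /= negbK.
Qed.

Lemma inC0 (R : realType) n : odd n -> inC n (0 : R).
Proof.
move=> hn; left; rewrite /Ppol !fpol0 /= hn /=; ring.
Qed.



Lemma modB (N J i : nat) : (i <= N)%N -> (((J %% N) + N - i) %% N = (J + N - i) %% N)%N.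
Proof.
move=> hi; rewrite -!addnBA //; exact: modnDml.
Qed.

Lemma invol (N J d : nat) : (0 < N)%N -> (d < N)%N ->
  ((J + N - (J + N - d) %% N) %% N = d)%N.
Proof.
move=> hN hd.
set x := (J + N - d)%N.
have hx : (J + N = x + d)%N by rewrite /x; lia.
have := (divn_eq x N); have := ltn_pmod x hN.
move: (x %/ N)%N (x %% N)%N => q r hr hxr.
have -> : (J + N - r = q * N + d)%N by lia.
by rewrite modnMDl modn_small.
Qed.

Lemma BmxE (R : realType) n (k a b : R) (i : 'I_n.+1) J :
  Bmx n.+1 k a b i (inZp J) = S k a b ((J + n.+1 - i) %% n.+1).+1.
Proof.
rewrite mxE /= -modB; last by have := ltn_ord i; lia.
set j := (J %% n.+1)%N.
have hj : (j < n.+1)%N by rewrite /j ltn_mod.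
have hi := ltn_ord i.
case: leqP => h.
- have -> : (j + n.+1 - i = (j - i) + n.+1)%N by lia.
  rewrite modnDr modn_small; last by lia.
  by rewrite addn1.
- rewrite modn_small; last by lia.
  congr (S _ _ _ _); lia.
Qed.

Lemma inZp_inj n J : (inZp (inZp J : 'I_n.+1) : 'I_n.+1) = inZp J.
Proof. by apply: val_inj; rewrite /= modn_mod. Qed.

Lemma reidx (R : realType) n (u : 'rV[R]_n.+1) J (F : nat -> R) :
  \sum_(i < n.+1) u 0 i * F ((J + n.+1 - i) %% n.+1)%N =
  \sum_(d < n.+1) u 0 (inZp (J + n.+1 - d)) * F d.
Proof.
pose h := fun d : 'I_n.+1 => (inZp (J + n.+1 - d) : 'I_n.+1).
have hh : forall d, h (h d) = d.
  move=> d; apply: val_inj; rewrite /h /=.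
  by apply: invol => //.
rewrite (reindex_inj (can_inj hh)) /=.
apply: eq_bigr => d _; congr (_ * F _).
exact: invol.
Qed.

Lemma colsum (R : realType) n (k a b : R) (u : 'rV[R]_n.+1) J :
  (u *m Bmx n.+1 k a b) 0 (inZp J) =
  \sum_(d < n.+1) u 0 (inZp (J + n.+1 - d)) * S k a b d.+1.
Proof.
rewrite mxE -(reidx u J (fun d => S k a b d.+1)).
by apply: eq_bigr => i _; rewrite BmxE.
Qed.



Lemma kerstep (R : realType) m (k a b : R) (u : 'rV[R]_m.+3) :
  u *m Bmx m.+3 k a b = 0 -> forall J,
  (S k a b 1 - S k a b m.+4) * u 0 (inZp (J + 2)) +
  (S k a b 0 - S k a b m.+3) * u 0 (inZp (J + 1)) = 0.
Proof.
move=> hu J.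
have h0 : forall J, (u *m Bmx m.+3 k a b) 0 (inZp J) = 0 by move=> J'; rewrite hu mxE.
pose G d := S k a b ((d + 2) %% m.+3).+1 - k * S k a b ((d + 1) %% m.+3).+1
   - S k a b d.+1.
have e : \sum_(i < m.+3) u 0 i * G ((J + m.+3 - i) %% m.+3)%N = 0.
  transitivity ((u *m Bmx m.+3 k a b) 0 (inZp (J + 2)) -
     k * (u *m Bmx m.+3 k a b) 0 (inZp (J + 1)) - (u *m Bmx m.+3 k a b) 0 (inZp J));
    last by rewrite !h0; ring.
  rewrite !mxE mulr_sumr -!sumrB.
  apply: eq_bigr => i _; rewrite !BmxE /G.
  have hi := ltn_ord i.
  have -> : ((J + 2 + m.+3 - i) %% m.+3 = ((J + m.+3 - i) %% m.+3 + 2) %% m.+3)%N.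
    by rewrite modnDml; congr (_ %% _)%N; lia.
  have -> : ((J + 1 + m.+3 - i) %% m.+3 = ((J + m.+3 - i) %% m.+3 + 1) %% m.+3)%N.
    by rewrite modnDml; congr (_ %% _)%N; lia.
  ring.
rewrite reidx big_ord_recr big_ord_recr /= big1 ?add0r in e; last first.
  move=> d _; rewrite /G /=.
  have hd := ltn_ord d.
  rewrite !modn_small; try lia.
  have -> : (d + 2 = d.+2)%N by lia.
  have -> : (d + 1 = d.+1)%N by lia.
  rewrite SS; ring.
move: e; rewrite /G.
have -> : ((m.+1 + 2) %% m.+3 = 0)%N by rewrite (_ : m.+1 + 2 = m.+3)%N ?modnn //; lia.
have -> : ((m.+1 + 1) %% m.+3 = m.+2)%N by rewrite modn_small; lia.
have -> : ((m.+2 + 2) %% m.+3 = 1)%N.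
  by rewrite (_ : m.+2 + 2 = 1 + m.+3)%N ?modnDr //; lia.
have -> : ((m.+2 + 1) %% m.+3 = 0)%N by rewrite (_ : m.+2 + 1 = m.+3)%N ?modnn //; lia.
have -> : (J + m.+3 - m.+1 = J + 2)%N by lia.
have -> : (J + m.+3 - m.+2 = J + 1)%N by lia.
rewrite (SS k a b m.+2) (SS k a b 0) => <-; ring.
Qed.



Lemma inZp_ord n (j : 'I_n.+1) : inZp j = j.
Proof. by apply: val_inj; rewrite /= modn_small. Qed.

Lemma inZp_per n J : (inZp (J + n.+1) : 'I_n.+1) = inZp J.
Proof. by apply: val_inj; rewrite /= modnDr. Qed.

Lemma ker_const (R : realType) m (k a b : R) (u : 'rV[R]_m.+3) :
  S k a b 0 - S k a b m.+3 != 0 ->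
  (S k a b 1 - S k a b m.+4) + (S k a b 0 - S k a b m.+3) = 0 ->
  u *m Bmx m.+3 k a b = 0 -> u = u 0 0 *: const_mx 1.
Proof.
move=> hbe hab hu.
have hs := kerstep hu.
set al := S k a b 1 - S k a b m.+4 in hab hs *; set be := S k a b 0 - S k a b m.+3 in hbe hab hs *.
have h1 : forall J, u 0 (inZp (J + 2)) = u 0 (inZp (J + 1)).
  move=> J; have := hs J; have -> : al = - be by rewrite -[al]subr0 -hab; ring.
  move=> e; apply/eqP; rewrite -subr_eq0; apply/eqP.
  apply: (mulfI hbe); rewrite mulr0.
  transitivity (- (- be * u 0 (inZp (J + 2)) + be * u 0 (inZp (J + 1)))); first ring.
  by rewrite e oppr0.
have h2 : forall J, u 0 (inZp (J + 1)) = u 0 (inZp 1).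
  elim=> [|J IH] //; rewrite -IH -(h1 J); congr (u 0 (inZp _)); lia.
have h3 : forall J, u 0 (inZp J) = u 0 (inZp 1).
  case=> [|J]; last by rewrite -(h2 J) addn1.
  by rewrite -(inZp_per m.+2 0) -(h2 m.+2) add0n addn1.
apply/rowP => j; rewrite !mxE mulr1 -[j]inZp_ord h3.
by rewrite -(inZp_ord (0 : 'I_m.+3)) h3.
Qed.

Lemma ker_nz (R : realType) m (k a b : R) (u : 'rV[R]_m.+3) :
  odd m.+3 -> u *m Bmx m.+3 k a b = 0 -> u != 0 ->
  (S k a b 1 - S k a b m.+4) + (S k a b 0 - S k a b m.+3) = 0.
Proof.
move=> hodd hu hnz.
have hs := kerstep hu.
set al := S k a b 1 - S k a b m.+4 in hs *; set be := S k a b 0 - S k a b m.+3 in hs *.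
apply/eqP; apply: contraNT hnz => hab; apply/eqP.
suff h : forall J, u 0 (inZp (J + 1)) = 0.
  apply/rowP => j; rewrite mxE -[j]inZp_ord.
  case: (val j) => [|J]; first by rewrite -(inZp_per m.+2 0) add0n; have := h m.+2; rewrite addn1.
  by have := h J; rewrite addn1.
have [al0|alnz] := eqVneq al 0.
  have benz : be != 0 by move: hab; rewrite al0 add0r.
  move=> J; have := hs J; rewrite al0 mul0r add0r => /eqP.
  by rewrite mulf_eq0 (negPf benz) /= => /eqP.
pose t := - be / al.
have hst : forall J, u 0 (inZp (J + 2)) = t * u 0 (inZp (J + 1)).
  move=> J; have := hs J => e.
  have e2 : al * u 0 (inZp (J + 2)) = - (be * u 0 (inZp (J + 1))).
    by apply/eqP; rewrite -addr_eq0 e.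
  apply: (mulfI alnz); rewrite e2 /t; field; exact: alnz.
have hpow : forall J, u 0 (inZp (J + 1)) = t ^+ J * u 0 (inZp 1).
  elim=> [|J IH]; first by rewrite expr0 mul1r.
  have -> : (J.+1 + 1 = J + 2)%N by lia.
  by rewrite hst IH exprS mulrA.
have hw1 : u 0 (inZp 1) = 0.
  apply/eqP; apply: contraNT hab => hw.
  have e := hpow m.+3; rewrite (_ : (m.+3 + 1 = 1 + m.+3)%N) ?inZp_per in e; last by lia.
  have tn1 : t ^+ m.+3 = 1.
    apply: (mulIf hw); by rewrite mul1r -e.
  have tpos : 0 <= t by rewrite -(exprn_odd_ge0 _ hodd) tn1.
  have : t == 1 by move: tn1 => /eqP; rewrite pexprn_eq1 //.
  rewrite /t => /eqP et.
  have : - be = al by rewrite -[RHS]mul1r -et divfK.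
  move=> <-; apply/eqP; ring.
by move=> J; rewrite hpow hw1 mulr0.
Qed.



Lemma rank_ge (R : realType) m (k a b : R) :
  S k a b 0 - S k a b m.+3 != 0 ->
  (S k a b 1 - S k a b m.+4) + (S k a b 0 - S k a b m.+3) = 0 ->
  (m.+2 <= \rank (Bmx m.+3 k a b))%N.
Proof.
move=> hbe hab.
have hK : (kermx (Bmx m.+3 k a b) <= (const_mx 1 : 'rV[R]_m.+3))%MS.
  apply/row_subP => i.
  have hu : row i (kermx (Bmx m.+3 k a b)) *m Bmx m.+3 k a b = 0.
    by apply/sub_kermxP; exact: row_sub.
  rewrite (ker_const hbe hab hu); apply: scalemx_sub; exact: submx_refl.
have := mxrankS hK; rewrite mxrank_ker.
have := rank_leq_row (const_mx 1 : 'rV[R]_m.+3).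
have := rank_leq_col (Bmx m.+3 k a b).
lia.
Qed.

Lemma ker_exists (R : realType) m (k a b : R) :
  (\rank (Bmx m.+3 k a b) <= m.+2)%N ->
  exists u : 'rV[R]_m.+3, u *m Bmx m.+3 k a b = 0 /\ u != 0.
Proof.
move=> hr.
set K := kermx (Bmx m.+3 k a b).
have hK : K != 0.
  rewrite -mxrank_eq0 /K mxrank_ker; apply/eqP; lia.
case: (pickP (fun i => row i K != 0)) => [i hi|hn].
  exists (row i K); split => //.
  by apply/sub_kermxP; exact: row_sub.
move: hK; suff -> : K = 0 by rewrite eqxx.
apply/row_matrixP => i; rewrite row0.
by have := hn i => /negbFE /eqP.
Qed.

Lemma sumS (R : realType) (k a b : R) N :
  k * \sum_(d < N) S k a b d.+1 = S k a b N.+1 + S k a b N - S k a b 1 - S k a b 0.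
Proof.
elim: N => [|N IH]; first by rewrite big_ord0; ring.
rewrite big_ord_recr /= mulrDr IH (SS k a b N); ring.
Qed.

Lemma rank_le (R : realType) m (k a b : R) :
  \sum_(d < m.+3) S k a b d.+1 = 0 ->
  (\rank (Bmx m.+3 k a b) <= m.+2)%N.
Proof.
move=> hs.
set u := (const_mx 1 : 'rV[R]_m.+3).
have hu : u *m Bmx m.+3 k a b = 0.
  apply/rowP => j; rewrite -[j]inZp_ord colsum [RHS]mxE -[RHS]hs.
  by apply: eq_bigr => d _; rewrite mxE mul1r.
have hun : u != 0.
  apply/eqP => /rowP /(_ 0); rewrite !mxE => /eqP; by rewrite oner_eq0.
have hK : (u <= kermx (Bmx m.+3 k a b))%MS by apply/sub_kermxP.
have := mxrankS hK; rewrite mxrank_ker rank_rV hun.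
have := rank_leq_col (Bmx m.+3 k a b).
lia.
Qed.

Lemma SPQ (R : realType) (k a b : R) N :
  S k a b N.+1 + S k a b N - S k a b 1 - S k a b 0 =
  a * (Ppol N k - 1) + b * (Qpol N k - k - 2).
Proof.
rewrite /Ppol /Qpol !SE.
have -> : gpol k 1 = k by [].
have -> : gpol k 0 = 2 by [].
have -> : fpol k 1 = 1 by [].
have -> : fpol k 0 = 0 by [].
ring.
Qed.

Lemma ab0 (R : realType) m (k a b : R) : odd m.+3 -> k != 0 ->
  S k a b 1 - S k a b m.+4 = 0 -> S k a b 0 - S k a b m.+3 = 0 -> a = 0 /\ b = 0.
Proof.
move=> hodd hk hal hbe.
have hg := gpol_neq0 hodd hk.
rewrite gpolE in hg.
set x := fpol k m.+3 in hg *; set y := fpol k m.+4 in hg *.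
have cas : y * (y - k * x) - x ^+ 2 = -1.
  have := cassini k m.+2; rewrite -signr_odd hodd expr1.
  by rewrite /x /y (fpolS k m.+2) => <-; ring.
have eal : a * (1 - y) + b * (k - k * y - 2 * x) = 0.
  rewrite -hal !SE (gpolE k m.+4) (fpolS k m.+3) -/x -/y.
  have -> : gpol k 1 = k by [].
  have -> : fpol k 1 = 1 by [].
  ring.
have ebe : - a * x + b * (2 - 2 * y + k * x) = 0.
  rewrite -hbe !SE (gpolE k m.+3) -/x -/y.
  have -> : gpol k 0 = 2 by [].
  have -> : fpol k 0 = 0 by [].
  ring.
have det : (1 - y) * (2 - 2 * y + k * x) + x * (k - k * y - 2 * x) = - 2 * (2 * y - k * x).
  apply/eqP; rewrite -subr_eq0; apply/eqP.
  transitivity (2 * (y * (y - k * x) - x ^+ 2 + 1)); first ring.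
  by rewrite cas; ring.
have hd : - 2 * (2 * y - k * x) != 0.
  by rewrite mulf_neq0 // oppr_eq0 pnatr_eq0.
split.
  apply/eqP; rewrite -(mulIr_eq0 _ (mulIf hd)) -det.
  apply/eqP; transitivity ((2 - 2 * y + k * x) * (a * (1 - y) + b * (k - k * y - 2 * x))
     - (k - k * y - 2 * x) * (- a * x + b * (2 - 2 * y + k * x))); first ring.
  by rewrite eal ebe; ring.
apply/eqP; rewrite -(mulIr_eq0 _ (mulIf hd)) -det.
apply/eqP; transitivity ((1 - y) * (- a * x + b * (2 - 2 * y + k * x))
     + x * (a * (1 - y) + b * (k - k * y - 2 * x))); first ring.
by rewrite eal ebe; ring.
Qed.



Lemma solve3 (R : realType) (p q a b : R) : p != 0 -> q != 0 ->
  a * p + b * q = 0 -> 4 * a ^+ 3 + 27 * b ^+ 2 = 0 -> ~ (a = 0 /\ b = 0) ->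
  a = - (27 * p ^+ 2) / (4 * q ^+ 2) /\ b = 27 * p ^+ 3 / (4 * q ^+ 3).
Proof.
move=> hp hq h hcusp hnz.
have hap : a * p = - (b * q) by apply/eqP; rewrite -addr_eq0 h.
have hb : b != 0.
  apply/eqP => hb0; apply: hnz; split => //; apply/eqP.
  move: hap; rewrite hb0 mul0r oppr0 => /eqP; rewrite mulf_eq0 (negPf hp) orbF.
  done.
have e1 : p ^+ 3 * (4 * a ^+ 3 + 27 * b ^+ 2) = 4 * (a * p) ^+ 3 + 27 * b ^+ 2 * p ^+ 3.
  by ring.
rewrite hcusp mulr0 hap in e1.
have e : b ^+ 2 * (27 * p ^+ 3 - 4 * b * q ^+ 3) = 0 by rewrite [RHS]e1; ring.
have hb3 : 27 * p ^+ 3 - 4 * b * q ^+ 3 = 0.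
  by move/eqP: e; rewrite mulf_eq0 expf_eq0 (negPf hb) andbF /= => /eqP.
have h4 : 4 * q ^+ 3 != 0 by rewrite mulf_neq0 ?expf_neq0 // pnatr_eq0.
have bval : b = 27 * p ^+ 3 / (4 * q ^+ 3).
  apply: (mulIf h4); rewrite divfK //.
  rewrite -[27 * p ^+ 3](subrK (4 * b * q ^+ 3)) hb3 add0r; ring.
split => //.
apply: (mulIf hp); rewrite hap bval; field.
exact: hq.
Qed.

Lemma inT_facts (R : realType) m (k a b : R) : odd m.+3 ->
  inT m.+3 m.+2 k a b ->
  a * (Ppol m.+3 k - 1) + b * (Qpol m.+3 k - k - 2) = 0 /\
  \rank (Bmx m.+3 k a b) = m.+2.
Proof.
move=> hodd [hC [hk [hr [hcusp hnz]]]].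
have [u [hu hun]] := ker_exists hr.
have hab := ker_nz hodd hu hun.
have e : a * (Ppol m.+3 k - 1) + b * (Qpol m.+3 k - k - 2) = 0.
  rewrite -SPQ -[RHS]oppr0 -hab; ring.
split => //.
have hbe : S k a b 0 - S k a b m.+3 != 0.
  apply/eqP => hbe; apply: hnz; apply: (ab0 hodd hk) => //.
  by move: hab; rewrite hbe addr0.
have := rank_ge hbe hab; lia.
Qed.

Theorem theorem4p13 (R : realType) (n : nat) :
  odd n -> (3 <= n)%N ->
  (* (a) *)
  (forall k a b : R, inT n n.-1 k a b <->
     exists k' : R, ~ inC n k' /\ (k, a, b) = (k', a3 n k', b3 n k'))
  (* (b) *)
  /\ (exists s : seq (R * R * R), forall k a b : R,
        inT n n.-1 k a b -> \rank (Bmx n k a b) <> n.-1 -> (k, a, b) \in s)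
  (* (c) *)
  /\ (forall r : nat, (1 <= r)%N -> (r <= n - 2)%N ->
        exists s : seq (R * R * R), forall k a b : R,
          inT n n.-1 k a b -> \rank (Bmx n k a b) = r -> (k, a, b) \in s).
Proof.
case: n => [|[|[|m]]] hodd hn //=.
split; last split.
- move=> k a b; split.
    move=> hT; have [e _] := inT_facts hodd hT.
    case: hT => [hC [hk [hr [hcusp hnz]]]].
    have hp : Ppol m.+3 k - 1 != 0 by apply/eqP => h; apply: hC; left.
    have hq : Qpol m.+3 k - k - 2 != 0 by apply/eqP => h; apply: hC; right.
    have [-> ->] := solve3 hp hq e hcusp hnz.
    by exists k.
  case=> k' [hC [-> -> ->]].
  have hp : Ppol m.+3 k' - 1 != 0 by apply/eqP => h; apply: hC; left.
  have hq : Qpol m.+3 k' - k' - 2 != 0 by apply/eqP => h; apply: hC; right.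
  have hk : k' != 0 by apply/eqP => hk0; apply: hC; rewrite hk0; exact: inC0.
  have e : a3 m.+3 k' * (Ppol m.+3 k' - 1) + b3 m.+3 k' * (Qpol m.+3 k' - k' - 2) = 0.
    by rewrite /a3 /b3; field; rewrite hq.
  split => //; split => //; split; last split.
  + apply: rank_le.
    apply: (mulfI hk); rewrite sumS SPQ e; ring.
  + rewrite /a3 /b3; field; by rewrite hq.
  + case=> ha _; move: ha; apply/eqP; rewrite /a3.
    by rewrite mulf_neq0 // ?oppr_eq0 ?invr_eq0 mulf_neq0 ?expf_neq0 // ?pnatr_eq0.
- exists (Nil (R * R * R)); move=> k a b hT; have [_ ->] := inT_facts hodd hT; done.
- move=> r _ hr; exists (Nil (R * R * R)); move=> k a b hT; have [_ ->] := inT_facts hodd hT.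
  move=> er; move: hr; rewrite -er; lia.
Qed.
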